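(* Let $G$ be an abelian group and $\phi:G\to\mathbb{H}$ a function with $\phi(0)=1$ and $\sup_{g\in G}|\phi(g)|=1$ satisfying, for all $a,b\in G$, $$2\,\mathrm{Re}\,\phi(b)\,\mathrm{Re}\,\phi(a)=\mathrm{Re}\,\phi(a+b)+\mathrm{Re}\,\phi(a-b),\qquad 2\,\mathrm{Re}\,\phi(b)\,\mathrm{Im}\,\phi(a)=\mathrm{Im}\,\phi(a+b)+\mathrm{Im}\,\phi(a-b).$$ Then there exists an imaginary unit $I\in\mathbb{H}$ such that $\phi(G)\subseteq\mathbb{C}_I$.
   Context: $\mathbb{H}$ is the real quaternion algebra; for $q=a_0+a_1i_1+a_2i_2+a_3i_3$, $\mathrm{Re}\,q=a_0$, $\mathrm{Im}\,q=a_1i_1+a_2i_2+a_3i_3$, $|q|=\sqrt{a_0^2+a_1^2+a_2^2+a_3^2}$. An imaginary unit is a quaternion $I$ with $\mathrm{Re}\,I=0$, $|I|=1$; $\mathbb{C}_I=\mathbb{R}\oplus I\mathbb{R}$. *)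

(* Defs.v *)
From HB Require Import structures.
From mathcomp Require Import all_boot all_order all_algebra.
From mathcomp Require Import boolp classical_sets reals.
Set Implicit Arguments. Unset Strict Implicit. Unset Printing Implicit Defensive.
Import Order.TTheory GRing.Theory Num.Theory.
Local Open Scope ring_scope.

(** Real quaternions  q = a0 + a1 i1 + a2 i2 + a3 i3, as 4-tuples of reals. *)
Record quat (R : Type) := Quat { q0 : R; q1 : R; q2 : R; q3 : R }.

Section Quat.
Variable R : rcfType.

Definition qreal (r : R) : quat R := Quat r 0 0 0.
Definition qadd (p q : quat R) : quat R :=
  Quat (q0 p + q0 q) (q1 p + q1 q) (q2 p + q2 q) (q3 p + q3 q).
(** multiplication by a real scalar (= quaternion product with a real) *)
Definition qscale (r : R) (q : quat R) : quat R :=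
  Quat (r * q0 q) (r * q1 q) (r * q2 q) (r * q3 q).
Definition qRe (q : quat R) : R := q0 q.
Definition qIm (q : quat R) : quat R := Quat 0 (q1 q) (q2 q) (q3 q).
Definition qnorm (q : quat R) : R :=
  Num.sqrt (q0 q ^+ 2 + q1 q ^+ 2 + q2 q ^+ 2 + q3 q ^+ 2).
Definition imag_unit (I : quat R) : Prop := qRe I = 0 /\ qnorm I = 1.
Definition in_CI (I q : quat R) : Prop :=
  exists x y : R, q = qadd (qreal x) (qscale y I).
End Quat.

(* Main.v *)
Require Import Defs.
From HB Require Import structures.
From mathcomp Require Import all_boot all_order all_algebra.
From mathcomp Require Import boolp classical_sets reals.
From mathcomp Require Import ring lra.
Import Order.TTheory GRing.Theory Num.Theory.
Local Open Scope ring_scope.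
Local Open Scope classical_set_scope.

Lemma star_lemma (R : realType) (G : zmodType) (f g : G -> R)
  (g0 : g 0 = 0) (W : forall a b, 2 * f b * g a = g (a + b) + g (a - b)) :
  forall x y z, g z * (f (x + y) - f x * f y) = g x * (f (y + z) - f y * f z).
Proof.
have odd b : g (- b) = - g b.
  have := W 0 b; rewrite add0r sub0r g0 mulr0. lra.
have sine a b : g (a + b) = f b * g a + f a * g b.
  have h1 := W a b; have h2 := W b a.
  rewrite (addrC b a) -(opprB a b) odd in h2; lra.
move=> x y z.
have e := congr1 g (addrA x y z).
rewrite !sine in e; lra.
Qed.

Theorem mainTheorem10 (R : realType) (G : zmodType) (phi : G -> quat R)
  (phi0 : phi 0 = qreal 1)
  (phisup : sup [set qnorm (phi g) | g in [set: G]] = 1)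
  (hRe : forall a b : G,
     2 * qRe (phi b) * qRe (phi a) = qRe (phi (a + b)) + qRe (phi (a - b)))
  (hIm : forall a b : G,
     qscale (2 * qRe (phi b)) (qIm (phi a)) =
     qadd (qIm (phi (a + b))) (qIm (phi (a - b)))) :
  exists I : quat R, imag_unit I /\ forall g : G, in_CI I (phi g).
Proof.
have bound g : qnorm (phi g) <= 1.
  have [hs|hns] := pselect (has_sup [set qnorm (phi g) | g in [set: G]]).
    rewrite -phisup; apply: (sup_upper_bound hs); by exists g.
  by move: phisup; rewrite sup_out // => /eqP; rewrite eq_sym oner_eq0.
set f := fun x => q0 (phi x).
set v1 := fun x => q1 (phi x).
set v2 := fun x => q2 (phi x).
set v3 := fun x => q3 (phi x).
have S1 := @star_lemma R G f v1 (congr1 (@q1 R) phi0) (fun a b => congr1 (@q1 R) (hIm a b)).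
have S2 := @star_lemma R G f v2 (congr1 (@q2 R) phi0) (fun a b => congr1 (@q2 R) (hIm a b)).
have S3 := @star_lemma R G f v3 (congr1 (@q3 R) phi0) (fun a b => congr1 (@q3 R) (hIm a b)).
have bound2 g : f g ^+ 2 + v1 g ^+ 2 + v2 g ^+ 2 + v3 g ^+ 2 <= 1.
  have := bound g; rewrite /qnorm -/(f g) -/(v1 g) -/(v2 g) -/(v3 g).
  set S := _ + _ + _ + _.
  have S0 : 0 <= S by rewrite /S; nra.
  have := sqr_sqrtr S0; have := sqrtr_ge0 S; nra.
have f0 : f 0 = 1 by rewrite /f phi0.
have fodd b : f (- b) = f b.
  rewrite /f; have := hRe 0 b; rewrite /qRe add0r sub0r phi0 /=; lra.
have [[b hb]|nb] := pselect (exists b, v1 b ^+ 2 + v2 b ^+ 2 + v3 b ^+ 2 != 0); last first.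
  exists (Quat 0 1 0 0); split.
    split => //; rewrite /qnorm /=; have -> : (0:R) ^+ 2 + 1 ^+ 2 + 0 ^+ 2 + 0 ^+ 2 = 1 by ring. 
    exact: sqrtr1.
  move=> g; exists (f g), 0.
  have h : v1 g ^+ 2 + v2 g ^+ 2 + v3 g ^+ 2 = 0.
    by case: (eqVneq (v1 g ^+ 2 + v2 g ^+ 2 + v3 g ^+ 2) 0) => // H; exfalso; apply: nb; exists g.
  have h1 : v1 g = 0 by nra.
  have h2 : v2 g = 0 by nra.
  have h3 : v3 g = 0 by nra.
  move: h1 h2 h3; rewrite /qadd /qreal /qscale /v1 /v2 /v3 /f.
  case: (phi g) => a0 a1 a2 a3 /= -> -> ->; congr Quat; ring.
have [[y hy]|ny] := pselect (exists y, f (b + y) - f b * f y != 0); last first.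
  exfalso.
  have e : f (b + - b) - f b * f (- b) = 0.
    by case: (eqVneq (f (b + - b) - f b * f (- b)) 0) => // H; exfalso; apply: ny; exists (- b).
  rewrite addrN f0 fodd in e.
  have := bound2 b; move: hb; rewrite -subr_eq0; move=> hb. 
  have hb' : v1 b ^+ 2 + v2 b ^+ 2 + v3 b ^+ 2 != 0 by rewrite -subr_eq0.
  have hpos : 0 < v1 b ^+ 2 + v2 b ^+ 2 + v3 b ^+ 2.
    rewrite lt_neqAle eq_sym hb' /=; nra.
  nra.
set Sb := v1 b ^+ 2 + v2 b ^+ 2 + v3 b ^+ 2.
have Sbpos : 0 < Sb by rewrite lt_neqAle eq_sym hb /=; rewrite /Sb; nra.
set n := Num.sqrt Sb.
have npos : 0 < n by rewrite sqrtr_gt0.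
have nn : n ^+ 2 = Sb by rewrite sqr_sqrtr // ltW.
have nne : n != 0 by rewrite gt_eqF.
exists (Quat 0 (v1 b / n) (v2 b / n) (v3 b / n)); split.
  split => //; rewrite /qnorm /= expr0n /= add0r.
  have -> : (v1 b / n) ^+ 2 + (v2 b / n) ^+ 2 + (v3 b / n) ^+ 2 = 1.
    rewrite !expr_div_n nn -!mulrDl divff //; exact: hb.
  exact: sqrtr1.
move=> z; exists (f z), (n * (f (y + z) - f y * f z) / (f (b + y) - f b * f y)).
have e1 := S1 b y z; have e2 := S2 b y z; have e3 := S3 b y z.
move: e1 e2 e3; rewrite /qadd /qreal /qscale /v1 /v2 /v3 /f.
case: (phi z) => a0 a1 a2 a3 /=.
set E := (_ - _ * q0 (phi y)).
move=> e1 e2 e3.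
congr Quat.
- ring.
- apply: (mulIf hy); rewrite /f -/E e1; field; by rewrite nne hy.
- apply: (mulIf hy); rewrite /f -/E e2; field; by rewrite nne hy.
- apply: (mulIf hy); rewrite /f -/E e3; field; by rewrite nne hy.
Qed.
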